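(* Let $n$ be an even integer, and let $d, \rho, \alpha, \gamma > 0$. Let $G$ be a regular graph on $[n]$. Let $\{X,Y\}$ be a balanced bipartition of $[n]$, and suppose that $G[X,Y]$ is $(d,\rho,\alpha,\gamma)$-good. Suppose further that for some integer $K$ with $\frac{\rho}{\alpha}\leq K \leq \frac{\gamma \rho d}{2}$ there exist decompositions $\{H_{X,j}\}_{j \in [K]}$ of $G[X]$ and $\{H_{Y,j}\}_{j \in [K]}$ of $G[Y]$ into bipartite spanning subgraphs (each $H_{X,j}$ has vertex set $X$, each $H_{Y,j}$ has vertex set $Y$) such that for each $j \in [K]$: (A1) for each $U \in \{X,Y\}$, $\Delta(H_{U,j}) - \delta(H_{U,j}) \leq \frac{\gamma \rho d}{4K}$; (A2) $e(H_{X,j}) = e(H_{Y,j})$; (A3) $H_{X,j}$ and $H_{Y,j}$ have respective bipartitions $\{X_j', X_j''\}$ of $X$ and $\{Y_j', Y_j''\}$ of $Y$ (every edge of $H_{X,j}$ goes between $X'_j$ and $X''_j$, every edge of $H_{Y,j}$ goes between $Y'_j$ and $Y''_j$) which are $\frac{d}{5}$-good with respect to $G[X,Y]$. Then there exists a decomposition of $G$ into $K+1$ regular bipartite spanning subgraphs.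
   Context: Graphs are simple and finite. $G[U]$ is the induced subgraph on $U$; for disjoint $X,Y$, $G[X,Y]$ is the bipartite graph on $X\cup Y$ of all edges of $G$ between $X$ and $Y$. A balanced bipartition $\{X,Y\}$ has $|X|=|Y|$. A decomposition of a graph is a collection of pairwise edge-disjoint subgraphs whose edge sets cover all edges. $e(\cdot)$, $\Delta(\cdot)$, $\delta(\cdot)$ denote number of edges, maximum and minimum degree. For a function $f:V(H)\to\mathbb N$, an $f$-factor of $H$ is a spanning subgraph in which every vertex $v$ has degree $f(v)$; $f(S):=\sum_{v\in S}f(v)$. Definition ($d$-good bipartition): for a balanced bipartite graph $H=(X\cup Y,E)$ and $d>0$, a bipartition $\{X',X''\}$ of $X$ is $d$-good with respect to $H$ if $\big||X'|-|X''|\big|\leq1$ and $|N_H(y)\cap X'|,|N_H(y)\cap X''|\geq d$ for every $y\in Y$; a $d$-good bipartition of $Y$ is defined analogously. Definition (robustly matchable): a balanced bipartite graph $H=(X\cup Y,E)$ is $(d,\rho,\alpha,\gamma)$-robustly matchable if for every subgraph $F\subseteq H$ of maximum degree at most $\rho d$ and every real $0<\alpha'\leq\alpha$, the graph with edge set $E(H)\setminus E(F)$ has an $f$-factor for every integer-valued $f:X\cup Y\to[(1-\gamma)\alpha' d,\alpha' d]$ with $f(X)=f(Y)$. Definition (good): $H=(X\cup Y,E)$ balanced bipartite is $(d,\rho,\alpha,\gamma)$-good if for all $X'\subseteq X$, $Y'\subseteq Y$ with $|X'|=|Y'|$ and $\delta(H[X',Y'])\geq\frac d5$, the graph $H[X',Y']$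 is $(d,\rho,\alpha,\gamma)$-robustly matchable. *)

(* Defs.v *)
From HB Require Import structures.
From mathcomp Require Import all_boot all_order all_algebra.
From mathcomp Require Import reals.
Set Implicit Arguments. Unset Strict Implicit. Unset Printing Implicit Defensive.
Import Order.TTheory GRing.Theory Num.Theory.
Local Open Scope ring_scope.

Section Graphs.
Variable T : finType.

Definition simple_graph (E : rel T) : Prop := symmetric E /\ irreflexive E.

Definition subrel_of (F E : rel T) : Prop := forall u v, F u v -> E u v.

Definition deg (E : rel T) (v : T) : nat := #|[set u | E v u]|.

(* maximum / minimum degree over the vertex set V (0 if V is empty) *)
Definition maxdeg (V : {set T}) (E : rel T) : nat := \max_(v in V) deg E v.
Definition mindeg (V : {set T}) (E : rel T) : nat :=
  \big[minn/maxdeg V E]_(v in V) deg E v.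

Definition nedges (E : rel T) : nat := #|[set p : T * T | E p.1 p.2]|./2.

Definition regular_on (V : {set T}) (E : rel T) : Prop :=
  exists r : nat, forall v, v \in V -> deg E v = r.

Definition induced (E : rel T) (U : {set T}) : rel T :=
  fun u v => [&& E u v, u \in U & v \in U].

Definition bip (E : rel T) (X Y : {set T}) : rel T :=
  fun u v => E u v && (((u \in X) && (v \in Y)) || ((u \in Y) && (v \in X))).

Definition rdiff (E F : rel T) : rel T := fun u v => E u v && ~~ F u v.

Definition decomposition (I : finType) (E : rel T) (H : I -> rel T) : Prop :=
  (forall j, symmetric (H j)) /\
  (forall u v, E u v = [exists j, H j u v]) /\
  (forall j k u v, j != k -> H j u v -> ~~ H k u v).

Definition has_f_factor (V : {set T}) (E : rel T) (f : T -> int) : Prop :=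
  exists S : rel T, [/\ symmetric S, subrel_of S E &
     forall v, v \in V -> (deg S v)%:Z = f v].

Variable R : realType.

Definition robustly_matchable (X Y : {set T}) (E : rel T)
    (d rho alpha gamma : R) : Prop :=
  forall F : rel T, symmetric F -> subrel_of F E ->
    (maxdeg (X :|: Y) F)%:R <= rho * d ->
  forall alpha' : R, 0 < alpha' -> alpha' <= alpha ->
  forall f : T -> int,
    (forall v, v \in X :|: Y ->
       (1 - gamma) * alpha' * d <= (f v)%:~R /\ (f v)%:~R <= alpha' * d) ->
    \sum_(x in X) f x = \sum_(y in Y) f y ->
    has_f_factor (X :|: Y) (rdiff E F) f.

Definition good_graph (X Y : {set T}) (E : rel T) (d rho alpha gamma : R) : Prop :=
  forall X' Y' : {set T}, X' \subset X -> Y' \subset Y -> #|X'| = #|Y'| ->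
    d / 5 <= (mindeg (X' :|: Y') (bip E X' Y'))%:R ->
    robustly_matchable X' Y' (bip E X' Y') d rho alpha gamma.

Definition good_bipartition (A B : {set T}) (E : rel T) (c : R)
    (A1 A2 : {set T}) : Prop :=
  [/\ A1 :|: A2 = A, [disjoint A1 & A2],
      (#|A1| <= #|A2|.+1)%N /\ (#|A2| <= #|A1|.+1)%N &
      forall b, b \in B ->
        c <= #|[set a in A1 | E b a]|%:R /\ c <= #|[set a in A2 | E b a]|%:R].

Definition edges_between (E : rel T) (A1 A2 : {set T}) : Prop :=
  forall u v, E u v -> ((u \in A1) && (v \in A2)) || ((u \in A2) && (v \in A1)).

Definition bipartite (E : rel T) : Prop :=
  exists A : {set T}, edges_between E A (~: A).

End Graphs.

(* Main.v *)
Require Import Defs.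
From HB Require Import structures.
From mathcomp Require Import all_boot all_order all_algebra.
From mathcomp Require Import reals zify ring lra.
Import Order.TTheory GRing.Theory Num.Theory.
Set Implicit Arguments. Unset Strict Implicit. Unset Printing Implicit Defensive.

Lemma cardset_sum (T : finType) (P : pred T) :
  #|[set x | P x]| = \sum_x (P x : nat).
Proof.
rewrite -sum1_card big_mkcond /=; apply: eq_bigr => x _; rewrite inE.
by case: (P x).
Qed.

Lemma deg_sum (T : finType) (E : rel T) v : deg E v = \sum_u (E v u : nat).
Proof. exact: cardset_sum. Qed.

Lemma exists_le_sum (I : finType) (P : pred I) :
  ([exists i, P i] : nat) <= \sum_i (P i : nat).
Proof.
case: existsP => [[i Pi]|_] //.
by rewrite (bigD1 i) //= Pi leq_addr.
Qed.

Lemma exists_eq_sum (I : finType) (P : pred I) :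
  (forall i j, i != j -> P i -> ~~ P j) ->
  ([exists i, P i] : nat) = \sum_i (P i : nat).
Proof.
move=> dis; case: existsP => [[i Pi]|nP].
  rewrite (bigD1 i) //= Pi big1 // => j ji.
  by rewrite (negbTE (dis i j _ Pi)) // eq_sym.
by rewrite big1 // => i _; case: (boolP (P i)) => // Pi; case: nP; exists i.
Qed.

Lemma deg_decomp (T I : finType) (E : rel T) (D : I -> rel T) v :
  decomposition E D -> deg E v = \sum_i deg (D i) v.
Proof.
move=> [_ [cov dis]].
rewrite deg_sum.
under eq_bigr => u _ do rewrite cov (exists_eq_sum (fun i j ij => dis i j v u ij)).
rewrite exchange_big /=; apply: eq_bigr => i _; by rewrite deg_sum.
Qed.

Lemma regular_of (T : finType) (E : rel T) :
  (forall v w, deg E v = deg E w) -> regular_on setT E.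
Proof.
move=> h; case: (pickP (@predT T)) => [v0 _|none].
  by exists (deg E v0) => v _; apply: h.
by exists 0 => v; have := none v.
Qed.

Lemma deg_eq (T : finType) (E1 E2 : rel T) v :
  (forall u, E1 v u = E2 v u) -> deg E1 v = deg E2 v.
Proof. by move=> h; rewrite !deg_sum; apply: eq_bigr => u _; rewrite h. Qed.

Lemma deg_or (T : finType) (E1 E2 : rel T) v :
  (forall u, E1 v u -> ~~ E2 v u) ->
  deg (fun a b => E1 a b || E2 a b) v = deg E1 v + deg E2 v.
Proof.
move=> h; rewrite !deg_sum -big_split /=; apply: eq_bigr => u _.
by case: (boolP (E1 v u)) => [e1|_]; [rewrite (negbTE (h u e1))|].
Qed.

Lemma deg0 (T : finType) (E : rel T) v : (forall u, ~~ E v u) -> deg E v = 0.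
Proof. by move=> h; rewrite deg_sum big1 // => u _; rewrite (negbTE (h u)). Qed.

Lemma sum_deg_half (T : finType) (E : rel T) (A B : {set T}) :
  symmetric E -> edges_between E A B -> [disjoint A & B] ->
  \sum_(x in A) deg E x = nedges E /\ \sum_(x in B) deg E x = nedges E.
Proof.
move=> sE eb dAB.
have AnB x : x \in A -> x \notin B by move=> xA; rewrite (disjointFr dAB xA).
have sw : \sum_(x in A) deg E x = \sum_(x in B) deg E x.
  rewrite big_mkcond [RHS]big_mkcond /=.
  transitivity (\sum_x \sum_y ((x \in A) && E x y : nat)).
    apply: eq_bigr => x _; case: ifP => xA.
      by rewrite deg_sum; apply: eq_bigr => y _; rewrite ?xA.
    by rewrite big1 // => y _; rewrite ?xA.
  transitivity (\sum_x \sum_y ((y \in B) && E y x : nat)).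
    apply: eq_bigr => x _; apply: eq_bigr => y _; congr (nat_of_bool _).
    rewrite (sE y x); case: (boolP (E x y)) => exy; rewrite ?andbF ?andbT //.
    move: (eb x y exy) => /orP[/andP[xA yB]|/andP[xB yA]]; first by rewrite xA yB.
    by rewrite (negbTE (AnB _ yA)) (disjointFl dAB xB).
  rewrite exchange_big /=; apply: eq_bigr => y _; case: ifP => yB.
    by rewrite deg_sum; apply: eq_bigr => x _; rewrite ?yB.
  by rewrite big1 // => x _; rewrite ?yB.
have tot : \sum_x deg E x = \sum_(x in A) deg E x + \sum_(x in B) deg E x.
  rewrite !(big_mkcond (fun x => x \in _)) -big_split /=; apply: eq_bigr => x _.
  case: (boolP (x \in A)) => xA; first by rewrite (negbTE (AnB x xA)) addn0.
  case: (boolP (x \in B)) => xB //; rewrite add0n deg0 // => u; apply/negP=> e.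
  by move: (eb x u e); rewrite (negbTE xA) (negbTE xB).
have ne : nedges E = \sum_(x in A) deg E x.
  rewrite /nedges cardset_sum.
  rewrite -(pair_big predT predT (fun x y => (E x y : nat))) /=.
  under eq_bigr => x _ do rewrite -deg_sum.
  by rewrite tot -sw addnn doubleK.
by rewrite ne -sw.
Qed.

Lemma bigmin_le (I : finType) (P : pred I) (F : I -> nat) x0 i :
  P i -> \big[minn/x0]_(j | P j) F j <= F i.
Proof.
move=> Pi; have : i \in index_enum I by rewrite mem_index_enum.
elim: (index_enum I) => [|j s IH] //.
rewrite inE big_cons => /orP[/eqP<-|/IH h]; first by rewrite Pi geq_minl.
by case: (P j) => //; exact: leq_trans (geq_minr _ _) h.
Qed.

Lemma mindeg_le (T : finType) (V : {set T}) (E : rel T) v :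
  v \in V -> mindeg V E <= deg E v.
Proof. by move=> vV; apply: bigmin_le. Qed.

Lemma maxdeg_ge (T : finType) (V : {set T}) (E : rel T) v :
  v \in V -> deg E v <= maxdeg V E.
Proof. by move=> vV; rewrite /maxdeg (leq_bigmax_cond _ vV). Qed.

Lemma mindeg_empty (T : finType) (V : {set T}) (E : rel T) :
  V = set0 -> mindeg V E = 0 /\ maxdeg V E = 0.
Proof.
move=> ->; rewrite /mindeg /maxdeg !big_pred0 //= => x; by rewrite inE.
Qed.

Local Open Scope ring_scope.

Lemma mindeg_lb (R : numDomainType) (T : finType) (V : {set T}) (E : rel T)
  (c : R) v0 : v0 \in V -> (forall v, v \in V -> c <= (deg E v)%:R) ->
  c <= (mindeg V E)%:R.
Proof.
move=> v0V h; rewrite /mindeg; apply: (big_ind (fun m : nat => c <= m%:R)).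
- apply: le_trans (h _ v0V) _; rewrite ler_nat; exact: maxdeg_ge.
- by move=> x y hx hy; rewrite /minn; case: ifP.
- exact: h.
Qed.

Lemma maxdeg_ub (R : numDomainType) (T : finType) (V : {set T}) (E : rel T)
  (c : R) : 0 <= c -> (forall v, v \in V -> (deg E v)%:R <= c) ->
  (maxdeg V E)%:R <= c.
Proof.
move=> c0 h; rewrite /maxdeg; apply: (big_ind (fun m : nat => m%:R <= c)) => //.
by move=> x y hx hy; rewrite /maxn; case: ifP.
Qed.

Lemma bip_sym (T : finType) (E : rel T) A B : symmetric E -> symmetric (bip E A B).
Proof. by move=> sE u v; rewrite /bip (sE u v); case: (u \in A); case: (u \in B); case: (v \in A); case: (v \in B). Qed.

Lemma bipE (T : finType) (E : rel T) A B u v : bip E A B u v -> E u v.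
Proof. by case/andP. Qed.

Lemma eb_swap (T : finType) (E : rel T) A B :
  edges_between E A B -> edges_between E B A.
Proof. by move=> h u v /h; rewrite orbC. Qed.

Lemma card_disjU (T : finType) (A B : {set T}) :
  [disjoint A & B] -> (#|A :|: B| = #|A| + #|B|)%N.
Proof. by move=> dAB; rewrite -cardsUI (disjoint_setI0 dAB) cards0 addn0. Qed.

Lemma sum_disjU (T : finType) (A B : {set T}) (F : T -> nat) :
  [disjoint A & B] ->
  (\sum_(x in A :|: B) F x = \sum_(x in A) F x + \sum_(x in B) F x)%N.
Proof.
move=> dAB; rewrite -bigU //; apply: eq_bigl => x; by rewrite !inE.
Qed.

Lemma piece (R : realType) (T : finType) (d rho alpha gamma : R) (G : rel T)
  (X Y A B : {set T}) (Fp : rel T) (al : R) (f : T -> int) :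
  symmetric G -> good_graph X Y (bip G X Y) d rho alpha gamma ->
  A \subset X -> B \subset Y -> #|A| = #|B| -> [disjoint A & B] ->
  (forall a, a \in A -> d / 5 <= #|[set b in B | bip G X Y a b]|%:R) ->
  (forall b, b \in B -> d / 5 <= #|[set a in A | bip G X Y b a]|%:R) ->
  symmetric Fp -> (forall v, (deg Fp v)%:R <= rho * d) -> 0 <= rho * d ->
  0 < al -> al <= alpha ->
  (forall v, v \in A :|: B ->
     (1 - gamma) * al * d <= (f v)%:~R /\ (f v)%:~R <= al * d) ->
  \sum_(x in A) f x = \sum_(y in B) f y ->
  exists S : rel T, [/\ symmetric S,
    forall u v, S u v -> bip (bip G X Y) A B u v && ~~ Fp u v &
    forall v, v \in A :|: B -> (deg S v)%:Z = f v].
Proof.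
move=> sG good sAX sBY cAB dAB degA degB sFp dFp rd0 al0 alle fb fsum.
case: (set_0Vmem (A :|: B)) => [AB0|[v0 v0AB]].
  by exists (fun _ _ => false); split => // v; rewrite AB0 inE.
set E := bip (bip G X Y) A B.
have rm : robustly_matchable A B E d rho alpha gamma.
  apply: good => //; apply: (mindeg_lb v0AB) => v /setUP[vA|vB].
    have vB : v \notin B by rewrite (disjointFr dAB vA).
    apply: le_trans (degA v vA) _; rewrite ler_nat /deg; apply: subset_leq_card.
    apply/subsetP => u; rewrite !inE /E /bip vA (negbTE vB) /= => /andP[-> ->].
    by rewrite andbT.
  have vA : v \notin A by rewrite (disjointFl dAB vB).
  apply: le_trans (degB v vB) _; rewrite ler_nat /deg; apply: subset_leq_card.
  apply/subsetP => u; rewrite !inE /E /bip vB (negbTE vA) /= => /andP[-> ->].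
  by [].
have sE : symmetric E by apply: bip_sym; apply: bip_sym.
have [|||S [sS subS degS]] := rm (fun u v => E u v && Fp u v) _ _ _ al al0 alle f fb fsum.
- by move=> u v; rewrite sE sFp.
- by move=> u v /andP[].
- apply: maxdeg_ub => // v _; apply: le_trans (dFp v); rewrite ler_nat /deg.
  by apply: subset_leq_card; apply/subsetP => u; rewrite !inE => /andP[].
exists S; split => // u v /subS; rewrite /rdiff => /andP[-> /=].
by [].
Qed.

Lemma exists_t (R : realType) (aX bX aY bY : nat) (c s : R) :
  0 <= c -> 1 / 2 <= s -> bX%:R - aX%:R <= s -> bY%:R - aY%:R <= s ->
  (aX <= bY)%N -> (aY <= bX)%N ->
  exists t : nat, [/\ t%:R <= aX%:R + c, t%:R <= aY%:R + c,
     bX%:R + c - 4 * s <= t%:R & bY%:R + c - 4 * s <= t%:R].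
Proof.
move=> c0 s2 hX hY; rewrite -!(ler_nat R) => h1 h2.
have /andP[tl tu] := truncn_itv c0.
rewrite -natr1 in tu.
case: (leqP aX aY) => a12; rewrite -(ler_nat R) in a12 || rewrite -(ltr_nat R) in a12.
- exists (aX + Num.trunc c)%N; rewrite natrD; split; lra.
- exists (aY + Num.trunc c)%N; rewrite natrD; split; lra.
Qed.

Lemma sum_f (T : finType) (A : {set T}) (g : T -> nat) (t : nat) :
  \sum_(x in A) (t%:Z - (g x)%:Z) = (#|A| * t)%:Z - (\sum_(x in A) g x)%:Z.
Proof.
rewrite sumrB sumr_const (big_morph Posz PoszD (erefl _)).
congr (_ - _); by rewrite -mulr_natr natz PoszM mulrC.
Qed.

Lemma disj_sub (T : finType) (A B X Y : {set T}) :
  A \subset X -> B \subset Y -> [disjoint X & Y] -> [disjoint A & B].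
Proof.
move=> sA sB dXY; apply: (disjointWl sA); apply: (disjointWr sB) dXY.
Qed.

Lemma step (R : realType) (T : finType) (d rho alpha gamma : R) (G : rel T)
  (X Y : {set T}) (K : nat) (HXj HYj : rel T) (X1 X2 Y1 Y2 : {set T})
  (Fp : rel T) :
  0 < d -> 0 < rho -> 0 < alpha -> 0 < gamma ->
  symmetric G -> X :|: Y = setT -> [disjoint X & Y] -> #|X| = #|Y| ->
  good_graph X Y (bip G X Y) d rho alpha gamma ->
  rho / alpha <= K%:R -> K%:R <= gamma * rho * d / 2 ->
  symmetric HXj -> (forall u v, HXj u v -> (u \in X) && (v \in X)) ->
  symmetric HYj -> (forall u v, HYj u v -> (u \in Y) && (v \in Y)) ->
  (maxdeg X HXj)%:R - (mindeg X HXj)%:R <= gamma * rho * d / (4 * K%:R) ->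
  (maxdeg Y HYj)%:R - (mindeg Y HYj)%:R <= gamma * rho * d / (4 * K%:R) ->
  nedges HXj = nedges HYj ->
  edges_between HXj X1 X2 -> good_bipartition X Y (bip G X Y) (d / 5) X1 X2 ->
  edges_between HYj Y1 Y2 -> good_bipartition Y X (bip G X Y) (d / 5) Y1 Y2 ->
  symmetric Fp -> (forall v, (deg Fp v)%:R <= rho * d) ->
  exists S : rel T, [/\ symmetric S,
    (forall u v, S u v -> bip G X Y u v && ~~ Fp u v),
    (exists t, forall v,
       (deg S v + (if v \in X then deg HXj v else deg HYj v) = t)%N),
    (forall v, (deg S v)%:R <= rho / K%:R * d) &
    exists A : {set T},
      edges_between (fun u v => [|| HXj u v, HYj u v | S u v]) A (~: A)].
Proof.
move=> d0 r0 a0 g0 sG XY dXY cXY good hK1 hK2 sHX inHX sHY inHY A1X A1Y A2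
  ebX gX ebY gY sFp dFp.
have K0 : 0 < K%:R :> R.
  by apply: lt_le_trans hK1; apply: divr_gt0.
set c := rho / K%:R * d.
set s := gamma * rho * d / (4 * K%:R).
have c0 : 0 <= c by rewrite /c; apply/ltW/mulr_gt0 => //; apply: divr_gt0.
have s2 : 1 / 2 <= s.
  rewrite /s ler_pdivlMr ?mulr_gt0 // ?ltr0n //.
  rewrite ler_pdivlMr // in hK2; move: hK2; clear; move=> hK2; lra.
have gc : gamma * c = 4 * s by rewrite /c /s; field; rewrite gt_eqF.
have alle : rho / K%:R <= alpha.
  rewrite ler_pdivrMr //; rewrite ler_pdivrMr // in hK1; by rewrite mulrC.
have al0 : 0 < rho / K%:R by apply: divr_gt0.
case: gX => X12 dX12 [bX1 bX2] gXd.
case: gY => Y12 dY12 [bY1 bY2] gYd.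
have sX1 : X1 \subset X by rewrite -X12 subsetUl.
have sX2 : X2 \subset X by rewrite -X12 subsetUr.
have sY1 : Y1 \subset Y by rewrite -Y12 subsetUl.
have sY2 : Y2 \subset Y by rewrite -Y12 subsetUr.
have cX := card_disjU dX12; rewrite X12 in cX.
have cY := card_disjU dY12; rewrite Y12 in cY.
have [P [Q [PQ dPQ [cP cQ] ebPQ gPQ]]] : exists P Q : {set T},
  [/\ P :|: Q = Y, [disjoint P & Q], #|X1| = #|P| /\ #|X2| = #|Q|,
      edges_between HYj P Q &
      forall x, x \in X -> d / 5 <= #|[set a in P | bip G X Y x a]|%:R /\
                           d / 5 <= #|[set a in Q | bip G X Y x a]|%:R].
  case: (boolP (#|X1| == #|Y2|)) => /eqP e.
    exists Y2, Y1; split.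
    - by rewrite setUC.
    - by rewrite disjoint_sym.
    - split => //; move: cX cY cXY bX1 bX2 bY1 bY2 e; clear; lia.
    - exact: eb_swap.
    - by move=> x /gYd [].
  exists Y1, Y2; split => //.
  have : #|X1| = #|Y1| by move: cX cY cXY bX1 bX2 bY1 bY2 e; clear; lia.
  by move=> h; split => //; move: cX cY cXY h; clear; lia.
have sP : P \subset Y by rewrite -PQ subsetUl.
have sQ : Q \subset Y by rewrite -PQ subsetUr.
have [sX1e sX2e] := sum_deg_half sHX ebX dX12.
have [sPe sQe] := sum_deg_half sHY ebPQ dPQ.
have sumX : (\sum_(x in X) deg HXj x = nedges HXj + nedges HXj)%N.
  by rewrite -X12 sum_disjU // sX1e sX2e.
have sumY : (\sum_(x in Y) deg HYj x = nedges HXj + nedges HXj)%N.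
  by rewrite -PQ sum_disjU // sPe sQe A2.
set aX := mindeg X HXj; set bX := maxdeg X HXj.
set aY := mindeg Y HYj; set bY := maxdeg Y HYj.
have aXbY : (aX <= bY)%N.
  case: (set_0Vmem X) => [X0|[x0 x0X]].
    by rewrite /aX; have [-> _] := mindeg_empty HXj X0.
  have cpos : (0 < #|X|)%N by apply/card_gt0P; exists x0.
  rewrite -(leq_pmul2l cpos).
  apply: (@leq_trans (\sum_(x in X) deg HXj x)).
    rewrite -sum_nat_const; apply: leq_sum => x xX; exact: mindeg_le.
  rewrite sumX -sumY cXY -sum_nat_const; apply: leq_sum => y yY; exact: maxdeg_ge.
have aYbX : (aY <= bX)%N.
  case: (set_0Vmem Y) => [Y0|[y0 y0Y]].
    by rewrite /aY; have [-> _] := mindeg_empty HYj Y0.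
  have cpos : (0 < #|Y|)%N by apply/card_gt0P; exists y0.
  rewrite -(leq_pmul2l cpos).
  apply: (@leq_trans (\sum_(x in Y) deg HYj x)).
    rewrite -sum_nat_const; apply: leq_sum => x xX; exact: mindeg_le.
  rewrite sumY -sumX -cXY -sum_nat_const; apply: leq_sum => y yY; exact: maxdeg_ge.
have [t [t1 t2 t3 t4]] := exists_t c0 s2 A1X A1Y aXbY aYbX.
pose degH v := if v \in X then deg HXj v else deg HYj v.
pose f v := (t%:Z - (degH v)%:Z).
have inXY v : (v \in X) || (v \in Y) by rewrite -in_setU XY inE.
have e1 : (1 - gamma) * (rho / K%:R) * d = c - 4 * s by rewrite -gc /c; ring.
have fb v : (1 - gamma) * (rho / K%:R) * d <= (f v)%:~R /\ (f v)%:~R <= rho / K%:R * d.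
  rewrite /f intrB -!pmulrn e1 -/c /degH; case: ifP => vX.
    have h1 : (mindeg X HXj)%:R <= (deg HXj v)%:R :> R by rewrite ler_nat; exact: mindeg_le.
    have h2 : (deg HXj v)%:R <= (maxdeg X HXj)%:R :> R by rewrite ler_nat; exact: maxdeg_ge.
    move: h1 h2 t1 t2 t3 t4; clear; move=> h1 h2 t1 t2 t3 t4; split; lra.
  have vY : v \in Y by move: (inXY v); rewrite vX.
  have h1 : (mindeg Y HYj)%:R <= (deg HYj v)%:R :> R by rewrite ler_nat; exact: mindeg_le.
  have h2 : (deg HYj v)%:R <= (maxdeg Y HYj)%:R :> R by rewrite ler_nat; exact: maxdeg_ge.
  move: h1 h2 t1 t2 t3 t4; clear; move=> h1 h2 t1 t2 t3 t4; split; lra.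
have fX (A : {set T}) : A \subset X ->
    \sum_(x in A) f x = (#|A| * t)%:Z - (\sum_(x in A) deg HXj x)%:Z.
  move=> sA; rewrite -sum_f; apply: eq_bigr => x xA.
  by rewrite /f /degH (subsetP sA x xA).
have fY (A : {set T}) : A \subset Y ->
    \sum_(x in A) f x = (#|A| * t)%:Z - (\sum_(x in A) deg HYj x)%:Z.
  move=> sA; rewrite -sum_f; apply: eq_bigr => x xA.
  by rewrite /f /degH (disjointFl dXY (subsetP sA x xA)).
have rd0 : 0 <= rho * d by apply/ltW/mulr_gt0.
have [S1 [sS1 subS1 degS1]] : exists S : rel T, [/\ symmetric S,
    forall u v, S u v -> bip (bip G X Y) X1 P u v && ~~ Fp u v &
    forall v, v \in X1 :|: P -> (deg S v)%:Z = f v].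
  apply: (piece (al := rho / K%:R) (f := f) sG good sX1 sP cP (disj_sub sX1 sP dXY)) => //.
  - by move=> a aX1; case: (gPQ a (subsetP sX1 a aX1)).
  - by move=> b bP; case: (gXd b (subsetP sP b bP)).
  - by rewrite fX // fY // sX1e sPe cP A2.
have [S2 [sS2 subS2 degS2]] : exists S : rel T, [/\ symmetric S,
    forall u v, S u v -> bip (bip G X Y) X2 Q u v && ~~ Fp u v &
    forall v, v \in X2 :|: Q -> (deg S v)%:Z = f v].
  apply: (piece (al := rho / K%:R) (f := f) sG good sX2 sQ cQ (disj_sub sX2 sQ dXY)) => //.
  - by move=> a aX2; case: (gPQ a (subsetP sX2 a aX2)).
  - by move=> b bQ; case: (gXd b (subsetP sQ b bQ)).
  - by rewrite fX // fY // sX2e sQe cQ A2.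
have S1v v u : S1 v u -> v \in X1 :|: P.
  move/subS1 => /andP[/andP[_ /orP[/andP[h _]|/andP[h _]]] _]; by rewrite inE h ?orbT.
have S2v v u : S2 v u -> v \in X2 :|: Q.
  move/subS2 => /andP[/andP[_ /orP[/andP[h _]|/andP[h _]]] _]; by rewrite inE h ?orbT.
have cover v : (v \in X1 :|: P) || (v \in X2 :|: Q).
  case/orP: (inXY v); [rewrite -X12|rewrite -PQ]; rewrite !inE;
    by case/orP => ->; rewrite ?orbT.
have dYX : [disjoint Y & X] by rewrite disjoint_sym.
have excl v : v \in X1 :|: P -> v \notin X2 :|: Q.
  rewrite !inE negb_or => /orP[vX1|vP].
    by rewrite (disjointFr dX12 vX1) (disjointFr (disj_sub sX1 sQ dXY) vX1).
  by rewrite (disjointFr (disj_sub sP sX2 dYX) vP) (disjointFr dPQ vP).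
pose S u v := S1 u v || S2 u v.
have degS v : (deg S v)%:Z = f v.
  case/orP: (cover v) => vin.
    rewrite -degS1 //; congr Posz; apply: deg_eq => u; rewrite /S.
    case: (boolP (S2 v u)) => [/S2v h|_]; last by rewrite orbF.
    by move: (excl v vin); rewrite h.
  rewrite -degS2 //; congr Posz; apply: deg_eq => u; rewrite /S.
  case: (boolP (S1 v u)) => [/S1v h|_] //.
  by move: (excl v h); rewrite vin.
exists S; split.
- by move=> u v; rewrite /S sS1 sS2.
- move=> u v /orP[/subS1|/subS2] /andP[/bipE -> ->] //.
- exists t => v; move: (degS v); rewrite /f /degH.
  by case: (v \in X) => h; clear -h; lia.
- by move=> v; have [_ h] := fb v; rewrite -(degS v) in h.
exists (X1 :|: Q).
have hA1 x : x \in X1 -> x \in X1 :|: Q by move=> h; rewrite inE h.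
have hAQ x : x \in Q -> x \in X1 :|: Q by move=> h; rewrite inE h orbT.
have hA2 x : x \in X2 -> x \notin X1 :|: Q.
  move=> h; rewrite inE negb_or (disjointFl dX12 h).
  by rewrite (disjointFr (disj_sub sX2 sQ dXY) h).
have hAP x : x \in P -> x \notin X1 :|: Q.
  move=> h; rewrite inE negb_or (disjointFr dPQ h).
  by rewrite (disjointFl (disj_sub sX1 sP dXY) h).
suff h : forall u v, [|| HXj u v, HYj u v | S u v] ->
    (u \in X1 :|: Q) != (v \in X1 :|: Q).
  move=> u v /h; rewrite !inE.
  by case: (u \in X1); case: (u \in Q); case: (v \in X1); case: (v \in Q).
move=> u v /or3P[e|e|/orP[e|e]].
- case/orP: (ebX u v e) => /andP[hu hv].
    by rewrite (hA1 u hu) (negbTE (hA2 v hv)).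
  by rewrite (hA1 v hv) (negbTE (hA2 u hu)).
- case/orP: (ebPQ u v e) => /andP[hu hv].
    by rewrite (hAQ v hv) (negbTE (hAP u hu)).
  by rewrite (hAQ u hu) (negbTE (hAP v hv)).
- move/subS1: e => /andP[/andP[_ /orP[/andP[hu hv]|/andP[hu hv]]] _].
    by rewrite (hA1 u hu) (negbTE (hAP v hv)).
  by rewrite (hA1 v hv) (negbTE (hAP u hu)).
- move/subS2: e => /andP[/andP[_ /orP[/andP[hu hv]|/andP[hu hv]]] _].
    by rewrite (hAQ v hv) (negbTE (hA2 u hu)).
  by rewrite (hAQ u hu) (negbTE (hA2 v hv)).
Qed.

Unset Implicit Arguments.

Theorem lemma4p6 (R : realType) (n : nat) (d rho alpha gamma : R)
  (G : rel 'I_n) (X Y : {set 'I_n}) (K : nat)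
  (HX : 'I_K -> rel 'I_n) (HY : 'I_K -> rel 'I_n)
  (X' X'' Y' Y'' : 'I_K -> {set 'I_n}) :
  ~~ odd n ->
  0 < d -> 0 < rho -> 0 < alpha -> 0 < gamma ->
  simple_graph G -> regular_on setT G ->
  X :|: Y = setT -> [disjoint X & Y] -> #|X| = #|Y| ->
  good_graph X Y (bip G X Y) d rho alpha gamma ->
  rho / alpha <= K%:R -> K%:R <= gamma * rho * d / 2 ->
  decomposition (induced G X) HX ->
  decomposition (induced G Y) HY ->
  (forall j : 'I_K,
     [/\ (maxdeg X (HX j))%:R - (mindeg X (HX j))%:R
           <= gamma * rho * d / (4 * K%:R),
         (maxdeg Y (HY j))%:R - (mindeg Y (HY j))%:R
           <= gamma * rho * d / (4 * K%:R),
         nedges (HX j) = nedges (HY j),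
         edges_between (HX j) (X' j) (X'' j)
           /\ good_bipartition X Y (bip G X Y) (d / 5) (X' j) (X'' j) &
         edges_between (HY j) (Y' j) (Y'' j)
           /\ good_bipartition Y X (bip G X Y) (d / 5) (Y' j) (Y'' j)]) ->
  exists D : 'I_K.+1 -> rel 'I_n,
    decomposition G D /\
    (forall i, regular_on setT (D i) /\ bipartite (D i)).
Proof.
move=> _ d0 r0 a0 g0 [sG iG] [r regG] XY dXY cXY good hK1 hK2 dHX dHY hyp.
have [sHX [covX disX]] := dHX.
have [sHY [covY disY]] := dHY.
have inHX j u v : HX j u v -> (u \in X) && (v \in X).
  move=> e; have : induced G X u v by rewrite covX; apply/existsP; exists j.
  by case/and3P => _ -> ->.
have inHY j u v : HY j u v -> (u \in Y) && (v \in Y).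
  move=> e; have : induced G Y u v by rewrite covY; apply/existsP; exists j.
  by case/and3P => _ -> ->.
have HXG j u v : HX j u v -> G u v.
  move=> e; have : induced G X u v by rewrite covX; apply/existsP; exists j.
  by case/and3P.
have HYG j u v : HY j u v -> G u v.
  move=> e; have : induced G Y u v by rewrite covY; apply/existsP; exists j.
  by case/and3P.
have K0 : 0 < K%:R :> R.
  by apply: lt_le_trans hK1; apply: divr_gt0.
set c := rho / K%:R * d.
have c0 : 0 <= c by rewrite /c; apply/ltW/mulr_gt0 => //; apply: divr_gt0.
have Kc : c * K%:R = rho * d by rewrite /c; field; rewrite gt_eqF.
pose degH j v := if v \in X then deg (HX j) v else deg (HY j) v.
pose Prop1 (j : 'I_K) (F : rel 'I_n) := [/\ symmetric F,
   (forall u v, F u v -> bip G X Y u v),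
   (exists t, forall v, (deg F v + degH j v = t)%N),
   (forall v, (deg F v)%:R <= c) &
   exists A : {set 'I_n},
     edges_between (fun u v => [|| HX j u v, HY j u v | F u v]) A (~: A)].
have main : forall m, (m <= K)%N -> exists Fs : 'I_K -> rel 'I_n,
  (forall j : 'I_K, (j < m)%N -> Prop1 j (Fs j)) /\
  (forall j k : 'I_K, (j < m)%N -> (k < m)%N -> j != k ->
     forall u v, Fs j u v -> ~~ Fs k u v).
  elim => [_|m IH mK].
    by exists (fun _ _ _ => false); split => //.
  have [Fs [P1 P2]] := IH (ltnW mK).
  pose jm := Ordinal mK.
  pose Fp u v := [exists k : 'I_K, (k < m)%N && Fs k u v].
  have sFp : symmetric Fp.
    move=> u v; apply/existsP/existsP => -[k /andP[km e]]; exists k;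
      rewrite km /=; by have [sk _ _ _ _] := P1 k km; rewrite sk.
  have dFp v : (deg Fp v)%:R <= rho * d.
    have h1 : (deg Fp v <= \sum_(k : 'I_K) (if (k < m)%N then deg (Fs k) v else 0))%N.
      rewrite deg_sum; apply: (@leq_trans (\sum_u \sum_(k : 'I_K) ((k < m)%N && Fs k v u : nat))).
        by apply: leq_sum => u _; apply: exists_le_sum.
      rewrite exchange_big /=; apply/eq_leq/eq_bigr => k _; case: ifP => km.
        by rewrite deg_sum.
      by rewrite big1.
    rewrite -(ler_nat R) in h1; apply: (le_trans h1); rewrite natr_sum -Kc.
    rewrite mulr_natr -[K in _ *+ K]card_ord -sumr_const.
    apply: ler_sum => k _; case: ifP => km //.
    by have [_ _ _ hb _] := P1 k km.
  have [A1X A1Y A2 [ebX gX] [ebY gY]] := hyp jm.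
  have [S [sS subS [t ht] bS [A ebA]]] :=
    step d0 r0 a0 g0 sG XY dXY cXY good hK1 hK2 (sHX jm) (inHX jm)
      (sHY jm) (inHY jm) A1X A1Y A2 ebX gX ebY gY sFp dFp.
  exists (fun k => if k == jm then S else Fs k); split.
    move=> j jm1; have : (j == m :> nat) || (j < m)%N by rewrite -leq_eqVlt -ltnS.
    move=> /orP[/eqP jmE|jm'].
      have -> : j = jm by apply: val_inj.
      rewrite eqxx; split; [exact: sS | by move=> u v /subS /andP[] | by exists t | exact: bS | by exists A].
    have -> : (j == jm) = false by apply/negbTE; rewrite -val_eqE /= neq_ltn jm'.
    exact: P1.
  have ltm (i : 'I_K) : (i < m.+1)%N -> i != jm -> (i < m)%N.
    by move=> h1 h2; rewrite ltn_neqAle -ltnS h1 andbT; rewrite -val_eqE in h2.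
  move=> j k jm1 km1 jk u v.
  case: (eqVneq j jm) => [jE|jn]; case: (eqVneq k jm) => [kE|kn].
  - by rewrite jE kE eqxx in jk.
  - move=> /subS /andP[_ nF]; apply/negP => e; case/negP: nF.
    by rewrite /Fp; apply/existsP; exists k; rewrite (ltm k km1 kn) e.
  - move=> e; apply/negP => /subS /andP[_ nF]; case/negP: nF.
    by rewrite /Fp; apply/existsP; exists j; rewrite (ltm j jm1 jn) e.
  - exact: P2 (ltm j jm1 jn) (ltm k km1 kn) jk u v.
have [Fs [P1 P2]] := main K (leqnn K).
have Fsbip j u v : Fs j u v -> bip G X Y u v.
  by have [_ h _ _ _] := P1 j (ltn_ord j); apply: h.
have sFs j : symmetric (Fs j) by have [h _ _ _ _] := P1 j (ltn_ord j).
have XnY u : u \in X -> u \in Y -> False by move=> uX; rewrite (disjointFr dXY uX).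
have inXY v : (v \in X) || (v \in Y) by rewrite -in_setU XY inE.
have bipXX u v : bip G X Y u v -> (u \in X) && (v \in X) -> False.
  case/andP => _ /orP[/andP[_ vY]|/andP[uY _]] /andP[uX vX]; [exact: XnY vX vY|exact: XnY uX uY].
have bipYY u v : bip G X Y u v -> (u \in Y) && (v \in Y) -> False.
  case/andP => _ /orP[/andP[uX _]|/andP[_ vX]] /andP[uY vY]; [exact: XnY uX uY|exact: XnY vX vY].
have hcXY j k u v : HX j u v -> ~~ HY k u v.
  move=> e; apply/negP => e'; case/andP: (inHX j u v e) => uX _.
  by case/andP: (inHY k u v e') => uY _; apply: XnY uX uY.
have cXF j k u v : HX j u v -> ~~ Fs k u v.
  by move=> e; apply/negP => /Fsbip b; apply: bipXX b (inHX j u v e).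
have cYF j k u v : HY j u v -> ~~ Fs k u v.
  by move=> e; apply/negP => /Fsbip b; apply: bipYY b (inHY j u v e).
pose L u v := bip G X Y u v && ~~ [exists j, Fs j u v].
pose D (i : 'I_K.+1) u v :=
  if unlift ord_max i is Some j then [|| HX j u v, HY j u v | Fs j u v] else L u v.
have DS j u v : D (lift ord_max j) u v = [|| HX j u v, HY j u v | Fs j u v].
  by rewrite /D liftK.
have DN u v : D ord_max u v = L u v by rewrite /D unlift_none.
have decD : decomposition G D.
  split; [|split].
  - move=> i u v; case: (unliftP ord_max i) => [j ->|->]; rewrite ?DS ?DN.
      by rewrite (sHX j) (sHY j) (sFs j).
    rewrite /L (bip_sym _ _ sG); congr (_ && ~~ _); apply: eq_existsb => j.
    by rewrite sFs.
  - move=> u v; apply/idP/existsP.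
      move=> Guv; case: (boolP ((u \in X) && (v \in X))) => [/andP[uX vX]|nXX].
        have : induced G X u v by rewrite /induced Guv uX vX.
        rewrite covX => /existsP[j e]; exists (lift ord_max j); by rewrite DS e.
      case: (boolP ((u \in Y) && (v \in Y))) => [/andP[uY vY]|nYY].
        have : induced G Y u v by rewrite /induced Guv uY vY.
        rewrite covY => /existsP[j e]; exists (lift ord_max j); by rewrite DS e orbT.
      have b : bip G X Y u v.
        rewrite /bip Guv /=; move: nXX nYY (inXY u) (inXY v).
        by case: (u \in X); case: (u \in Y); case: (v \in X); case: (v \in Y).
      case: (boolP [exists j, Fs j u v]) => [/existsP[j e]|ne].
        by exists (lift ord_max j); rewrite DS e !orbT.
      by exists ord_max; rewrite DN /L b ne.
    case=> i; case: (unliftP ord_max i) => [j ->|->]; rewrite ?DS ?DN.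
      case/or3P => e; [exact: HXG e|exact: HYG e|exact: bipE (Fsbip _ _ _ e)].
    by case/andP => /bipE.
  - move=> i i' u v ii'.
    case: (unliftP ord_max i) ii' => [j ->|->]; case: (unliftP ord_max i') => [k ->|->];
      rewrite ?DS ?DN => ii'.
    + have jk : j != k by apply: contraNneq ii' => ->.
      case/or3P => e; rewrite !negb_or; apply/and3P; split.
      * exact: disX jk e.
      * exact: hcXY e.
      * exact: cXF e.
      * by apply/negP => e'; move: (hcXY k j u v e'); rewrite e.
      * exact: disY jk e.
      * exact: cYF e.
      * by apply/negP => e'; move: (cXF k j u v e'); rewrite e.
      * by apply/negP => e'; move: (cYF k j u v e'); rewrite e.
      * exact: P2 (ltn_ord j) (ltn_ord k) jk u v e.
    + case/or3P => e; rewrite /L negb_and.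
      * by apply/orP; left; apply/negP => b; apply: bipXX b (inHX j u v e).
      * by apply/orP; left; apply/negP => b; apply: bipYY b (inHY j u v e).
      * by rewrite negbK; apply/orP; right; apply/existsP; exists j.
    + case/andP => b ne; rewrite !negb_or; apply/and3P; split.
      * by apply/negP => e; apply: bipXX b (inHX k u v e).
      * by apply/negP => e; apply: bipYY b (inHY k u v e).
      * by apply/negP => e; case/negP: ne; apply/existsP; exists k.
    + by rewrite eqxx in ii'.
have regD j : exists t, forall v, deg (D (lift ord_max j)) v = t.
  have [_ _ [t ht] _ _] := P1 j (ltn_ord j).
  exists t => v; rewrite -(ht v) /degH; case: ifP => vX.
    transitivity (deg (fun a b => HX j a b || Fs j a b) v); last first.
      rewrite deg_or; [by rewrite addnC | by move=> u e; apply: cXF e].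
    apply: deg_eq => u; rewrite DS; case: (boolP (HY j v u)) => [e|_]; last by [].
    by case/andP: (inHY j v u e) => vY _; case: (XnY v); rewrite ?vX.
  transitivity (deg (fun a b => HY j a b || Fs j a b) v); last first.
    rewrite deg_or; [by rewrite addnC | by move=> u e; apply: cYF e].
  apply: deg_eq => u; rewrite DS; case: (boolP (HX j v u)) => [e|_]; last by [].
  by case/andP: (inHX j v u e) => vX' _; rewrite vX' in vX.
exists D; split => // i; case: (unliftP ord_max i) => [j ->|->].
  split.
    have [t ht] := regD j; by exists t => v _.
  have [_ _ _ _ [A ebA]] := P1 j (ltn_ord j).
  by exists A => u v; rewrite DS; apply: ebA.
split.
  apply: regular_of => v w.
  have : deg G v = deg G w by rewrite !regG ?inE.
  have e u : deg G u = (deg (D ord_max) u + \sum_(i < K.+1 | i != ord_max) deg (D i) u)%N.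
    by rewrite (deg_decomp u decD) (bigD1 ord_max).
  rewrite !e.
  have -> : \sum_(i < K.+1 | i != ord_max) deg (D i) v =
            \sum_(i < K.+1 | i != ord_max) deg (D i) w.
    apply: eq_bigr => i0; case: (unliftP ord_max i0) => [j ->|->]; last by rewrite eqxx.
    by move=> _; have [t ht] := regD j; rewrite !ht.
  by move/eqP; rewrite eqn_add2r => /eqP.
exists X => u v; rewrite DN /L => /andP[/andP[_ h] _]; rewrite !inE.
case/orP: h => /andP[h1 h2].
  by rewrite h1 (disjointFl dXY h2).
by rewrite h2 (disjointFl dXY h1).
Qed.
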